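(* Let $q=p^m$ be a prime power and let $J_{\mathbb{F}_q}$ be the group of unitaries on $\mathbb{C}^q$ generated by $F$, $P_\gamma$ and $M_\gamma$ for all $\gamma\in\mathbb{F}_q\setminus\{0\}$. Then $J_{\mathbb{F}_q}$ acts by conjugation transitively on the non-trivial elements of $\mathcal{G}_1/\langle\omega I\rangle$: for any $(\alpha,\beta),(\alpha',\beta')\in\mathbb{F}_q^2\setminus\{(0,0)\}$ there is $U\in J_{\mathbb{F}_q}$ such that $U^{-1}X_\alpha Z_\beta U$ is a scalar multiple of $X_{\alpha'}Z_{\beta'}$.
   Context: Let $\omega=\exp(2\pi i/p)$ and $\mathrm{tr}(\alpha)=\sum_{k=0}^{m-1}\alpha^{p^k}\in\mathbb{F}_p$ (identified with $\mathbb{Z}/p\mathbb{Z}$ in exponents of $\omega$). On $\mathbb{C}^q$ with orthonormal basis $\{|x\rangle:x\in\mathbb{F}_q\}$ define $X_\alpha=\sum_x|x+\alpha\rangle\langle x|$, $Z_\beta=\sum_z\omega^{\mathrm{tr}(\beta z)}|z\rangle\langle z|$, $M_\gamma=\sum_y|\gamma y\rangle\langle y|$ ($\gamma\neq0$), $F=\frac1{\sqrt q}\sum_{x,z}\omega^{\mathrm{tr}(xz)}|z\rangle\langle x|$. The error group $\mathcal{G}_1$ is the group generated by all $X_\alpha Z_\beta$, with center $\langle\omega I\rangle$. For $q$ odd, $P_\gamma=\sum_y\omega^{-\mathrm{tr}(\frac12\gamma y^2)}|y\rangle\langle y|$. For $q=2^m$, fix a self-dual basis $\{b_1,\dots,b_m\}$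 of $\mathbb{F}_q$ over $\mathbb{F}_2$ ($\mathrm{tr}(b_ib_j)=\delta_{ij}$), let $\mathrm{wgt}(y)=|\{j:\mathrm{tr}(yb_j)\ne0\}|$, $P_1=\sum_y(-i)^{\mathrm{wgt}(y)}|y\rangle\langle y|$, and $P_\gamma=M_{\gamma_0}^{-1}P_1M_{\gamma_0}$ where $\gamma_0^2=\gamma$. *)

(* Defs.v *)
From HB Require Import structures.
From mathcomp Require Import all_boot all_order all_algebra.
From mathcomp Require Import algC.
Set Implicit Arguments. Unset Strict Implicit. Unset Printing Implicit Defensive.
Import Order.TTheory GRing.Theory Num.Theory.
Local Open Scope ring_scope.

Section Defs.
Variables (K : finFieldType) (p : nat) (omega : algC).

Definition mdeg : nat := logn p #|K|.

Definition trK (a : K) : K := \sum_(k < mdeg) a ^+ (p ^ k).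

(* the trace as an exponent in Z/pZ, represented by some n < p with n%:R = tr a *)
Definition trexp (a : K) : nat := odflt 0%N (omap val [pick n : 'I_p | (n%:R : K) == trK a]).

Definition wtr (a : K) : algC := omega ^+ trexp a.

(* matrices on C^q with the orthonormal basis indexed by K (via enum_val) *)
Notation q := #|K|.
Definition mxK (f : K -> K -> algC) : 'M[algC]_q :=
  \matrix_(i, j) f (enum_val i) (enum_val j).

Definition Xop (alpha : K) := mxK (fun u v => (u == v + alpha)%:R).
Definition Zop (beta : K) := mxK (fun u v => (u == v)%:R * wtr (beta * u)).
Definition Mop (gamma : K) := mxK (fun u v => (u == gamma * v)%:R).
Definition Fop := mxK (fun z x => wtr (x * z) / sqrtC (q%:R)).

Definition Podd (gamma : K) :=
  mxK (fun u v => (u == v)%:R * (wtr (gamma * u ^+ 2 / 2))^-1).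

Definition self_dual (b : 'I_mdeg -> K) :=
  forall i j : 'I_mdeg, trK (b i * b j) = (i == j)%:R.
Definition wgt (b : 'I_mdeg -> K) (y : K) : nat :=
  #|[set j : 'I_mdeg | trK (y * b j) != 0]|.
Definition P1even (b : 'I_mdeg -> K) :=
  mxK (fun u v => (u == v)%:R * (- 'i) ^+ wgt b u).
(* the (unique) square root gamma0 of gamma in characteristic 2 *)
Definition sqrt2 (gamma : K) : K := odflt 1 [pick g : K | g ^+ 2 == gamma].
Definition Peven (b : 'I_mdeg -> K) (gamma : K) :=
  invmx (Mop (sqrt2 gamma)) *m P1even b *m Mop (sqrt2 gamma).

Definition Pop (b : 'I_mdeg -> K) (gamma : K) :=
  if p == 2%N then Peven b gamma else Podd gamma.

Inductive inJ (b : 'I_mdeg -> K) : 'M[algC]_q -> Prop :=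
  | inJ_F : inJ b Fop
  | inJ_P gamma : gamma != 0 -> inJ b (Pop b gamma)
  | inJ_M gamma : gamma != 0 -> inJ b (Mop gamma)
  | inJ_1 : inJ b 1%:M
  | inJ_mul U V : inJ b U -> inJ b V -> inJ b (U *m V)
  | inJ_inv U : inJ b U -> inJ b (invmx U).

End Defs.

(* Main.v *)
Require Import Defs.
From HB Require Import structures.
From mathcomp Require Import all_boot all_order all_algebra all_field.
From mathcomp Require Import algC ring.
Set Implicit Arguments. Unset Strict Implicit. Unset Printing Implicit Defensive.
Import GRing.Theory Num.Theory.
Local Open Scope ring_scope.


Section Trace.
Variables (K : finFieldType) (p : nat) (hp : p \in [pchar K]).

Lemma pprime : prime p. Proof. exact: pcharf_prime hp. Qed.

Lemma cardK : #|K| = (p ^ mdeg K p)%N.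
Proof. exact: (card_pprimeChar hp). Qed.

Lemma mdeg_gt0 : (0 < mdeg K p)%N.
Proof.
case E: (mdeg K p) => //; have := finNzRing_gt1 K.
by rewrite cardK E.
Qed.

Lemma frobD k (x y : K) : (x + y) ^+ (p ^ k) = x ^+ (p ^ k) + y ^+ (p ^ k).
Proof.
apply: exprDn_pchar; rewrite pnatX; apply/orP; left.
by rewrite pnatE ?pprime.
Qed.

Lemma trKD (x y : K) : trK p (x + y) = trK p x + trK p y.
Proof. by rewrite /trK -big_split; apply: eq_bigr => k _; rewrite frobD. Qed.

Lemma trK_frob (x : K) : trK p x ^+ p = trK p x.
Proof.
rewrite /trK -(pFrobenius_autE hp) rmorph_sum /=.
have Hm := mdeg_gt0.
under eq_bigr => k _ do rewrite pFrobenius_autE -exprM -expnSr.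
case E: (mdeg K p) Hm => [//|m] _.
rewrite big_ord_recr big_ord_recl /= expn0 expr1.
have -> : x ^+ (p ^ m.+1) = x by rewrite -E -cardK expf_card.
rewrite addrC; congr (_ + _); apply: eq_bigr => i _ //.
Qed.


Lemma natK_inj (n m : nat) : (n < p)%N -> (m < p)%N -> n%:R = m%:R :> K -> n = m.
Proof.
wlog le_nm : n m / (n <= m)%N.
  move=> W Hn Hm E; case: (leqP n m) => H; first exact: W.
  by symmetry; apply: W => //; apply: ltnW.
move=> Hn Hm E.
have: (p %| m - n)%N.
  by rewrite (dvdn_pcharf hp) natrB // E subrr.
move/dvdn_leq; case: (posnP (m - n)) => [H0 _|H1 /(_ isT) H2].
  by apply/eqP; rewrite eqn_leq le_nm /= -subn_eq0 H0.
have: (m - n < p)%N by apply: leq_ltn_trans (leq_subr _ _) Hm.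
by rewrite ltnNge H2.
Qed.

Lemma prime_field (x : K) : x ^+ p = x -> exists n : 'I_p, n%:R = x.
Proof.
move=> Hx; case: (pickP (fun n : 'I_p => n%:R == x)) => [n /eqP Hn|H].
  by exists n.
exfalso.
have p_gt1 := prime_gt1 pprime.
pose P : {poly K} := 'X^p - 'X.
have P0 : P != 0.
  by rewrite -size_poly_eq0 /P size_polyDl ?size_polyXn // size_polyN size_polyX.
have sP : size P = p.+1.
  by rewrite /P size_polyDl ?size_polyXn // size_polyN size_polyX.
pose rs := x :: [seq (val n)%:R | n <- enum 'I_p] : seq K.
have := @max_poly_roots _ P rs P0.
have -> : all (root P) rs.
  apply/allP => y; rewrite inE => /orP [/eqP->|/mapP [n _ ->]];
    rewrite /root /P !hornerE ?Hx ?subrr //.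
  by rewrite -(pFrobenius_autE hp) pFrobenius_aut_nat subrr.
have -> : uniq rs.
  rewrite /= map_inj_uniq ?enum_uniq ?andbT.
    by apply/mapP => -[n _ /esym/eqP]; rewrite H.
  by move=> n m /natK_inj E; apply/val_inj/E.
by rewrite sP /= size_map size_enum_ord ltnn => /(_ isT isT).
Qed.


Lemma trexpE (a : K) : (trexp p a)%:R = trK p a /\ (trexp p a < p)%N.
Proof.
have [n Hn] := prime_field (trK_frob a).
rewrite /trexp; case: pickP => [n' /eqP H|H] /=; first by split.
by have := H n; rewrite Hn eqxx.
Qed.

Lemma natKmod (n : nat) : n%:R = (n %% p)%N%:R :> K.
Proof. by rewrite {1}(divn_eq n p) natrD natrM (pcharf0 hp) mulr0 add0r. Qed.

Lemma natK_eqmod (n m : nat) : n%:R = m%:R :> K -> (n %% p = m %% p)%N.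
Proof.
move=> E; apply: natK_inj; rewrite ?ltn_mod ?prime_gt0 ?pprime //.
by rewrite -!natKmod.
Qed.

Lemma trK_poly : exists x : K, trK p x != 0.
Proof.
have p_gt1 := prime_gt1 pprime.
have Hm := mdeg_gt0.
case: (pickP (fun x : K => trK p x != 0)) => [x Hx|H]; first by exists x.
exfalso.
set m := mdeg K p in Hm H.
pose T : {poly K} := \sum_(k < m) 'X^(p ^ k).
have T0 : T != 0.
  have Hm1 : (m.-1 < m)%N by rewrite ltn_predL.
  apply/eqP => /(congr1 (fun P : {poly K} => P`_(p ^ m.-1))).
  rewrite coef0 /T coef_sum (bigD1 (Ordinal Hm1)) //= coefXn eqxx big1.
    by rewrite addr0; apply/eqP; rewrite oner_eq0.
  move=> k Hk; rewrite coefXn eqn_exp2l //.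
  by case: eqP => // E; move: Hk; rewrite -val_eqE /= E eqxx.
have sT : (size T <= (p ^ m.-1).+1)%N.
  apply: leq_trans (size_sum _ _ _) _.
  apply/bigmax_leqP => k _; rewrite size_polyXn ltnS leq_exp2l //.
  by rewrite -ltnS prednK.
have := @max_poly_roots _ T (enum K) T0.
have -> : all (root T) (enum K).
  apply/allP => y _; rewrite /root /T horner_sum.
  have E : \sum_(k < m) ('X^(p ^ k)).[y] = trK p y.
    by apply: eq_bigr => k _; rewrite hornerXn.
  by rewrite E; apply: negbFE (H y).
rewrite enum_uniq -cardE cardK => /(_ isT isT) Hlt.
have := leq_trans Hlt sT; rewrite -/m ltnS.
rewrite -{1}(prednK Hm) expnS leqNgt ltn_Pmull // expn_gt0 prime_gt0 ?pprime //.
Qed.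

End Trace.

Section Char.
Variables (K : finFieldType) (p : nat) (hp : p \in [pchar K]).
Variables (omega : algC) (homega : p.-primitive_root omega).
Local Notation w := (@wtr K p omega).

Lemma omega_neq0 : omega != 0.
Proof.
apply/eqP => E; have := prim_expr_order homega.
by rewrite E expr0n gtn_eqF ?prime_gt0 ?(pprime hp) // => /eqP; rewrite eq_sym oner_eq0.
Qed.

Lemma wtr_neq0 (a : K) : w a != 0.
Proof. by rewrite /wtr expf_neq0 // omega_neq0. Qed.

Lemma wtrD (a b : K) : w (a + b) = w a * w b.
Proof.
rewrite /wtr -exprD -(prim_expr_mod homega (trexp p (a + b))).
rewrite -(prim_expr_mod homega (_ + _)); congr (_ ^+ _).
by apply: (natK_eqmod hp); rewrite natrD !(trexpE hp _).1 trKD.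
Qed.

Lemma wtr0 : w 0 = 1.
Proof.
have := wtrD 0 0; rewrite addr0 => /eqP; rewrite -subr_eq0 -{1}(mulr1 (w 0)).
by rewrite -mulrBr mulf_eq0 (negbTE (wtr_neq0 0)) /= subr_eq0 eq_sym => /eqP.
Qed.

Lemma wtrN (a : K) : w (- a) = (w a)^-1.
Proof.
apply: (mulfI (wtr_neq0 a)); rewrite -wtrD subrr wtr0 divff //.
exact: wtr_neq0.
Qed.

Lemma wtr_nontriv : exists x : K, w x != 1.
Proof.
have [x Hx] := trK_poly hp; exists x.
rewrite /wtr -(prim_order_dvd homega).
have [E lt] := trexpE hp x.
apply/negP => /dvdn_leq; case: (posnP (trexp p x)) => [H0|H1 /(_ isT)].
  by move: Hx; rewrite -E H0 eqxx.
by rewrite leqNgt lt.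
Qed.

Lemma char_sum (a : K) : a != 0 -> \sum_(x : K) w (x * a) = 0.
Proof.
move=> a0; have [x0 Hx0] := wtr_nontriv.
set S := \sum_(x : K) _.
have : S = S * w x0.
  rewrite {1}/S [LHS](reindex_inj (addIr (x0 / a))) /= /S mulr_suml.
  apply: eq_bigr => x _; rewrite mulrDl -mulrA mulVf // mulr1 wtrD //.
move/eqP; rewrite -subr_eq0 -{1}(mulr1 S) -mulrBr mulf_eq0 subr_eq0.
by case/orP => [/eqP //|]; rewrite eq_sym (negbTE Hx0).

Qed.

End Char.


Section Mx.
Variable (K : finFieldType).

Lemma mxK_eq (f g : K -> K -> algC) : (forall u v, f u v = g u v) -> mxK f = mxK g.
Proof. by move=> E; apply/matrixP => i j; rewrite !mxE E. Qed.

Lemma mxK_mul (f g : K -> K -> algC) :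
  mxK f *m mxK g = mxK (fun u v => \sum_(y : K) f u y * g y v).
Proof.
apply/matrixP => i j; rewrite !mxE.
rewrite (big_enum_val (A := K) (fun y => f (enum_val i) y * g y (enum_val j))).
by apply: eq_bigr => k _; rewrite !mxE.
Qed.

Lemma mxK_scale (c : algC) (f : K -> K -> algC) :
  c *: mxK f = mxK (fun u v => c * f u v).
Proof. by apply/matrixP => i j; rewrite !mxE. Qed.

Lemma mxK_1 : (1%:M : 'M[algC]_#|K|) = mxK (fun u v => (u == v)%:R).
Proof.
by apply/matrixP => i j; rewrite !mxE (inj_eq enum_val_inj).
Qed.

Lemma sum_delta (c : K) (g : K -> algC) : \sum_(y : K) (y == c)%:R * g y = g c.
Proof.
rewrite (bigD1 c) //= eqxx mul1r big1 ?addr0 // => y /negbTE ->.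
by rewrite mul0r.
Qed.

Lemma sum_delta' (c : K) (g : K -> algC) : \sum_(y : K) g y * (y == c)%:R = g c.
Proof. by rewrite -(sum_delta c g); apply: eq_bigr => y _; rewrite mulrC. Qed.

Lemma eq_shiftK (u y a : K) : (u == y + a) = (y == u - a).
Proof. by rewrite [RHS]eq_sym subr_eq. Qed.

End Mx.

Lemma sum_delta2 (K : finFieldType) (c : K) (f g : K -> algC) :
  \sum_(y : K) (y == c)%:R * f y * g y = f c * g c.
Proof. by rewrite -(sum_delta c (fun y => f y * g y)); apply: eq_bigr => y _; rewrite mulrA. Qed.


Section Ops.
Variables (K : finFieldType) (p : nat) (hp : p \in [pchar K]).
Variables (omega : algC) (homega : p.-primitive_root omega).
Local Notation w := (@wtr K p omega).
Local Notation M := 'M[algC]_#|K|.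

Definition W (a b : K) : M := Xop a *m Zop p omega b.

Lemma W_E (a b : K) : W a b = mxK (fun u v => (u == v + a)%:R * w (b * v)).
Proof.
rewrite /W /Xop /Zop mxK_mul; apply: mxK_eq => u v.
under eq_bigr => y _ do rewrite mulrCA.
by rewrite sum_delta.
Qed.

Lemma Mop_inv (g : K) : g != 0 -> Mop g *m Mop g^-1 = 1%:M.
Proof.
move=> g0; rewrite /Mop mxK_mul mxK_1; apply: mxK_eq => u v.
rewrite sum_delta' mulrA mulfV // mul1r //.
Qed.

Lemma Mop_unit (g : K) : g != 0 -> Mop g \in unitmx.
Proof. by move=> g0; case: (mulmx1_unit (Mop_inv g0)). Qed.

Lemma M_conj (a b g : K) : g != 0 ->
  W a b *m Mop g = Mop g *m W (a / g) (b * g).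
Proof.
move=> g0; rewrite !W_E /Mop !mxK_mul; apply: mxK_eq => u v.
rewrite sum_delta'.
under eq_bigr => y _ do rewrite mulrCA.
by rewrite sum_delta mulrDr [g * (a / g)]mulrC divfK // mulrA.
Qed.


Local Notation F := (Fop K p omega).
Local Notation s := (sqrtC (#|K|%:R) : algC).

Lemma s_neq0 : s != 0.
Proof. by rewrite sqrtC_eq0 pnatr_eq0 -lt0n; apply/card_gt0P; exists 0. Qed.

Lemma F_inv : F *m mxK (fun x z => w (- (z * x)) / s) = 1%:M.
Proof.
rewrite /Fop mxK_mul mxK_1; apply: mxK_eq => u v.
under eq_bigr => y _ do rewrite mulrACA -wtrD // [v * _]mulrC -mulrBr.
rewrite -mulr_suml; case: eqP => [->|/eqP uv].
  under eq_bigr => y _ do rewrite subrr mulr0 (wtr0 hp homega).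
  rewrite sumr_const -invfM -expr2 sqrtCK -mulr_natl mulfV //.
  by rewrite mulr1 pnatr_eq0 -lt0n; apply/card_gt0P; exists 0.
by rewrite char_sum ?subr_eq0 // mul0r.
Qed.


Lemma F_unit : F \in unitmx.
Proof. by case: (mulmx1_unit F_inv). Qed.

Lemma XF (a : K) : Xop a *m F = F *m Zop p omega (- a).
Proof.
rewrite /Fop /Xop /Zop !mxK_mul; apply: mxK_eq => u x.
under eq_bigr => y _ do rewrite eq_shiftK.
rewrite sum_delta.
under eq_bigr => y _ do rewrite mulrA [_ * (y == x)%:R]mulrC -mulrA.
rewrite sum_delta -mulrA [_^-1 * _]mulrC mulrA -wtrD //.
by congr (w _ / _); ring.
Qed.

Lemma ZF (b : K) : Zop p omega b *m F = F *m Xop b.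
Proof.
rewrite /Fop /Xop /Zop !mxK_mul; apply: mxK_eq => u x.
under eq_bigr => y _ do rewrite eq_sym -mulrA.
rewrite sum_delta.
under eq_bigr => y _ do rewrite mulrC.
rewrite sum_delta mulrA -wtrD //.
by congr (w _ / _); ring.
Qed.

Lemma ZX_swap (c b : K) :
  Zop p omega c *m Xop b = w (c * b) *: (Xop b *m Zop p omega c).
Proof.
rewrite -/(W b c) W_E /Xop /Zop mxK_mul mxK_scale; apply: mxK_eq => u v.
under eq_bigr => y _ do rewrite eq_sym -mulrA.
rewrite sum_delta; case: eqP => [->|_]; last by rewrite !mul0r !mulr0.
by rewrite mulr1 mul1r -wtrD //; congr w; ring.
Qed.

Lemma F_conj (a b : K) : W a b *m F = F *m (w (- a * b) *: W b (- a)).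
Proof.
rewrite /W -mulmxA ZF mulmxA XF -mulmxA ZX_swap //.
Qed.


Lemma Podd_inv (g : K) :
  Podd p omega g *m mxK (fun u v => (u == v)%:R * w (g * u ^+ 2 / 2)) = 1%:M.
Proof.
rewrite /Podd mxK_mul mxK_1; apply: mxK_eq => u v.
under eq_bigr => y _ do rewrite mulrCA.
rewrite sum_delta; case: eqP => [->|_]; last by rewrite !mul0r.
by rewrite mul1r mulVf //; exact: wtr_neq0.
Qed.

Lemma Podd_unit (g : K) : Podd p omega g \in unitmx.
Proof. by case: (mulmx1_unit (Podd_inv g)). Qed.

Lemma P_conj (g a b : K) : p != 2%N ->
  W a b *m Podd p omega g = Podd p omega g *m (w (g * a ^+ 2 / 2) *: W a (b + g * a)).
Proof.
move=> p2.
have two0 : (2%:R : K) != 0.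
  by rewrite -(dvdn_pcharf hp) dvdn_prime2 ?(pprime hp).

rewrite !W_E /Podd mxK_scale !mxK_mul; apply: mxK_eq => u v.
under eq_bigr => y _ do rewrite mulrCA.
rewrite sum_delta.
under eq_bigr => y _ do rewrite [u == y]eq_sym.
rewrite sum_delta2; case: eqP => [->|_]; last by rewrite !mul0r !mulr0.
rewrite (_ : g * (v + a) ^+ 2 / 2 = g * v ^+ 2 / 2 + g * a * v + g * a ^+ 2 / 2); last by field.
rewrite (_ : (b + g * a) * v = b * v + g * a * v); last by ring.
rewrite !wtrD //.
have := wtr_neq0 hp homega; move=> nz.
field; rewrite ?nz //.
Qed.

End Ops.


Section Even.
Variables (K : finFieldType) (hp : 2%N \in [pchar K]).
Variables (omega : algC) (homega : 2.-primitive_root omega).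
Variables (b : 'I_(mdeg K 2) -> K) (hb : @self_dual K 2 b).
Local Notation m := (mdeg K 2).
Local Notation tr := (@trK K 2).
Local Notation w := (@wtr K 2 omega).

Lemma tr01 (x : K) : tr x = 0 \/ tr x = 1.
Proof.
have [<- lt] := trexpE hp x.
by case: (trexp 2 x) lt => [|[|//]] _; [left|right].
Qed.

Lemma two0 : (1 + 1 : K) = 0.
Proof. by have := pcharf0 hp. Qed.

Lemma tr0 : tr 0 = 0.
Proof. by rewrite /trK big1 // => k _; rewrite expr0n expn_eq0. Qed.

Lemma tr_sum (P : pred 'I_m) (f : 'I_m -> K) :
  tr (\sum_(j | P j) f j) = \sum_(j | P j) tr (f j).
Proof. exact: (big_morph _ (trKD hp) tr0). Qed.

Definition code (y : K) : {ffun 'I_m -> bool} := [ffun j => tr (y * b j) != 0].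
Definition dec (f : {ffun 'I_m -> bool}) : K := \sum_(j | f j) b j.

Lemma tr_dec (f : {ffun 'I_m -> bool}) i : tr (dec f * b i) = (f i)%:R.
Proof.
rewrite /dec mulr_suml tr_sum.
under eq_bigr => j _ do rewrite hb.
case fi: (f i).
  rewrite (bigD1 i) //= eqxx big1 ?addr0 // => j /andP [_ /negbTE ->] //.
by rewrite big1 // => j fj; case: eqP => // E; move: fj; rewrite E fi.
Qed.

Lemma code_dec : cancel dec code.
Proof.
move=> f; apply/ffunP => i; rewrite ffunE tr_dec.
by case: (f i); rewrite ?eqxx ?oner_eq0.
Qed.

Lemma dec_code (y : K) : dec (code y) = y.
Proof.
have inj : injective dec := can_inj code_dec.
have card : (#|K| <= #|{ffun 'I_m -> bool}|)%N.
  by rewrite card_ffun card_bool card_ord (cardK hp).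
have /codomP [f ->] := inj_card_onto inj card y.
by rewrite code_dec.
Qed.

Lemma tr_code (x : K) j : tr (x * b j) = (code x j)%:R.
Proof. by rewrite ffunE; case: (tr01 (x * b j)) => ->; rewrite ?eqxx ?oner_eq0. Qed.

Lemma tr_mul (x y : K) : tr (x * y) = (\sum_j (code x j && code y j) : nat)%:R.
Proof.
rewrite -{1}(dec_code y) /dec mulr_sumr tr_sum natr_sum big_mkcond /=.
apply: eq_bigr => j _; rewrite tr_code.
by case: (code y j); rewrite ?andbT ?andbF.
Qed.

Lemma code_add (x y : K) j : code (x + y) j = code x j (+) code y j.
Proof.
have := tr_code (x + y) j; rewrite mulrDl trKD // !tr_code.
case: (code x j); case: (code y j); case: (code (x + y) j) => //=;
  rewrite ?addr0 ?add0r ?two0 => /eqP; rewrite ?oner_eq0 // eq_sym ?oner_eq0 //.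
Qed.

Lemma wgt_sum (y : K) : wgt b y = (\sum_j code y j : nat).
Proof.
rewrite /wgt -sum1_card big_mkcond /=; apply: eq_bigr => j _.
by rewrite inE ffunE; case: (_ != 0).
Qed.

Lemma wgt_add (x y : K) :
  (wgt b (x + y)%R + 2 * \sum_j (code x j && code y j) = wgt b x + wgt b y)%N.
Proof.
rewrite !wgt_sum big_distrr /= -!big_split /=; apply: eq_bigr => j _.
by rewrite code_add; case: (code x j); case: (code y j).
Qed.


Lemma omega_m1 : omega = -1.
Proof.
have h2 := prim_expr_order homega.
have h1 : omega != 1.
  by rewrite -[omega]expr1 -(prim_order_dvd homega 1).
have : (omega - 1) * (omega + 1) = 0.
  rewrite (_ : _ * _ = omega ^+ 2 - 1); last by ring.
  by rewrite h2 subrr.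
move/eqP; rewrite mulf_eq0 subr_eq0 (negbTE h1) /= addr_eq0 => /eqP //.
Qed.

Lemma w_mul (x y : K) : w (x * y) = omega ^+ (\sum_j (code x j && code y j)).
Proof.
rewrite /wtr -(prim_expr_mod homega) -[RHS](prim_expr_mod homega); congr (_ ^+ _).
by apply: (natK_eqmod hp); rewrite (trexpE hp _).1 tr_mul.
Qed.

Local Notation d y := ((- 'i) ^+ wgt b y : algC).

Lemma key (a v : K) : d v * d a = d (v + a) * w (a * v).
Proof.
rewrite -exprD -wgt_add exprD exprM w_mul omega_m1 sqrrN sqrCi.
by congr (_ * _ ^+ _); apply: eq_bigr => j _; rewrite andbC.
Qed.

Lemma d_neq0 y : d y != 0.
Proof. by rewrite expf_neq0 // oppr_eq0 neq0Ci. Qed.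

Lemma P1_inv : P1even b *m mxK (fun u v => (u == v)%:R * 'i ^+ wgt b u) = 1%:M.
Proof.
rewrite /P1even mxK_mul mxK_1; apply: mxK_eq => u v.
under eq_bigr => y _ do rewrite [u == y]eq_sym.
rewrite sum_delta2 mulrCA -exprMn mulNr -expr2 sqrCi opprK expr1n mulr1 //.
Qed.

Lemma P1_unit : P1even b \in unitmx.
Proof. by case: (mulmx1_unit P1_inv). Qed.

Lemma P1_conj (a be : K) :
  W 2 omega a be *m P1even b = P1even b *m ((d a)^-1 *: W 2 omega a (be + a)).
Proof.
rewrite !W_E /P1even mxK_scale !mxK_mul; apply: mxK_eq => u v.
under eq_bigr => y _ do rewrite mulrCA.
rewrite sum_delta.
under eq_bigr => y _ do rewrite [u == y]eq_sym.
rewrite sum_delta2; case: eqP => [->|_]; last by rewrite !mul0r !mulr0.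
rewrite mulrDl wtrD // [(be * v)%R]mulrC.
have := key a v; have := d_neq0 a; have := d_neq0 v; have := d_neq0 (v + a).
move=> n1 n2 n3 E.
rewrite !mul1r mulrCA [_ * (_ * w _)]mulrCA -E.
field; rewrite n3 //.
Qed.

End Even.


Lemma P1_unit_gen (K : finFieldType) (p : nat) (b : 'I_(mdeg K p) -> K) :
  P1even b \in unitmx.
Proof.
suff : P1even b *m mxK (fun u v => (u == v)%:R * 'i ^+ wgt b u) = 1%:M.
  by case/mulmx1_unit.
rewrite /P1even mxK_mul mxK_1; apply: mxK_eq => u v.
under eq_bigr => y _ do rewrite [u == y]eq_sym.
by rewrite sum_delta2 mulrCA -exprMn mulNr -expr2 sqrCi opprK expr1n mulr1.
Qed.

Section Main.
Variables (K : finFieldType) (p : nat) (hp : p \in [pchar K]).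
Variables (omega : algC) (homega : p.-primitive_root omega).
Variables (b : 'I_(mdeg K p) -> K) (hb : p = 2%N -> @self_dual K p b).
Local Notation M := 'M[algC]_#|K|.
Local Notation w := (@wtr K p omega).

Lemma sqrt2_neq0 (g : K) : g != 0 -> sqrt2 g != 0.
Proof.
move=> g0; rewrite /sqrt2; case: pickP => [x /eqP Hx|_] /=; last exact: oner_neq0.
by apply: contra g0 => /eqP x0; rewrite -Hx x0 expr0n.
Qed.

Lemma inJ_unit U : inJ omega b U -> U \in unitmx.
Proof.
elim => [|g g0|g g0| |U1 U2 _ h1 _ h2|U1 _ h1].
- exact: F_unit.
- rewrite /Pop; case: eqP => [E|_]; last exact: Podd_unit.
  by rewrite /Peven !unitmx_mul unitmx_inv Mop_unit ?sqrt2_neq0 //= P1_unit_gen.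
- exact: Mop_unit.
- exact: unitmx1.
- by rewrite unitmx_mul h1 h2.
- by rewrite unitmx_inv.
Qed.

Definition Rel (A B : M) := exists2 U, inJ omega b U &
  exists2 c : algC, c != 0 & A *m U = U *m (c *: B).

Lemma Rel_refl A : Rel A A.
Proof.
exists 1%:M; first exact: inJ_1.
by exists 1; rewrite ?oner_eq0 // mulmx1 mul1mx scale1r.
Qed.

Lemma Rel_trans A B C : Rel A B -> Rel B C -> Rel A C.
Proof.
move=> [U hU [c c0 EU]] [V hV [d d0 EV]].
exists (U *m V); first exact: inJ_mul.
exists (c * d); first by rewrite mulf_neq0.
by rewrite mulmxA EU -scalemxAr -scalemxAl -[U *m B *m V]mulmxA EV -!scalemxAr scalerA !mulmxA.
Qed.

Lemma Rel_sym A B : Rel A B -> Rel B A.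
Proof.
move=> [U hU [c c0 EU]]; have Uu := inJ_unit hU.
exists (invmx U); first exact: inJ_inv.
exists c^-1; first by rewrite invr_eq0.
have E : invmx U *m A = c *: (B *m invmx U).
  rewrite -[invmx U *m A](mulmxK Uu) -(mulmxA (invmx U) A U) EU mulKmx //.
  by rewrite scalemxAl.
by rewrite -scalemxAr E scalerA mulVf // scale1r.
Qed.

Lemma Rel_M a be g : g != 0 -> Rel (W p omega a be) (W p omega (a / g) (be * g)).
Proof.
move=> g0; exists (Mop g); first exact: inJ_M.
by exists 1; rewrite ?oner_eq0 // scale1r M_conj.
Qed.

Lemma Rel_F a be : Rel (W p omega a be) (W p omega be (- a)).
Proof.
exists (Fop K p omega); first exact: inJ_F.
by exists (w (- a * be)); [exact: wtr_neq0 | exact: F_conj].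
Qed.

Lemma Rel_P (g : K) (a be : K) : p != 2%N -> g != 0 ->
  Rel (W p omega a be) (W p omega a (be + g * a)).
Proof.
move=> p2 g0.
exists (Pop omega b g); first exact: inJ_P.
exists (w (g * a ^+ 2 / 2)); first exact: wtr_neq0.
by rewrite /Pop (negbTE p2) P_conj.
Qed.

End Main.

Lemma P1_inJ (K : finFieldType) (omega : algC) (b : 'I_(mdeg K 2) -> K) :
  inJ omega b (P1even b).
Proof.
set g := sqrt2 (1 : K).
have g0 : g != 0 by apply: sqrt2_neq0; exact: oner_neq0.
have Mu := Mop_unit g0.
have -> : P1even b = Mop g *m Pop omega b 1 *m invmx (Mop g).
  by rewrite /Pop eqxx /Peven !mulmxA mulmxV // mul1mx mulmxK.
apply: inJ_mul; last exact: inJ_inv (inJ_M _ _ g0).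
by apply: inJ_mul; [exact: inJ_M | apply: inJ_P; exact: oner_neq0].
Qed.

Lemma sqrt_ex (K : finFieldType) (hp : 2%N \in [pchar K]) (x : K) :
  exists y : K, y ^+ 2 = x.
Proof.
have inj : injective (fun y : K => y ^+ 2).
  exact: (fmorph_inj (pFrobenius_aut hp)).
have /codomP [y ->] := inj_card_onto inj (leqnn _) x.
by exists y.
Qed.

Lemma Rel_P1 (K : finFieldType) (hp : 2%N \in [pchar K]) (omega : algC)
  (homega : 2.-primitive_root omega) (b : 'I_(mdeg K 2) -> K)
  (hb : @self_dual K 2 b) (a be : K) :
  Rel omega b (W 2 omega a be) (W 2 omega a (be + a)).
Proof.
exists (P1even b); first exact: P1_inJ.
exists ((- 'i) ^+ wgt b a)^-1; first by rewrite invr_eq0 d_neq0.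
exact: P1_conj.
Qed.

Lemma Rel_to1 (K : finFieldType) (p : nat) (hp : p \in [pchar K])
  (omega : algC) (homega : p.-primitive_root omega)
  (b : 'I_(mdeg K p) -> K) (hb : p = 2%N -> @self_dual K p b) (a be : K) :
  (a, be) != (0, 0) -> Rel omega b (W p omega a be) (W p omega 1 0).
Proof.
have Ha0 a' : a' != 0 -> Rel omega b (W p omega a' 0) (W p omega 1 0).
  by move=> h; have := Rel_M omega b a' 0 h; rewrite divff // mul0r.
have Hab a' be' : a' != 0 -> Rel omega b (W p omega a' be') (W p omega 1 0).
  move=> a0; case: (eqVneq be' 0) => [->|b0]; first exact: Ha0.
  case: (eqVneq p 2) => [E|p2].
    subst p.
    have [g Hg] := sqrt_ex hp (a' / be').
    have g0 : g != 0.
      by apply/eqP => g0; move: Hg; rewrite g0 expr0n /= => /esym/eqP; rewrite mulf_eq0 invr_eq0 (negbTE a0) (negbTE b0).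
    have E1 : be' * g = a' / g.
      by apply: (mulIf g0); rewrite divfK // -mulrA -expr2 Hg mulrC divfK.
    apply: Rel_trans (Rel_M omega b a' be' g0) _.
    rewrite -E1; apply: Rel_trans (Rel_P1 hp homega (hb erefl) _ _) _.
    rewrite (_ : be' * g + be' * g = 0).
      by apply: Ha0; rewrite mulf_neq0.
    by rewrite -mulr2n -mulr_natr (pcharf0 hp) mulr0.
  have g0 : - be' / a' != 0 by rewrite mulf_neq0 ?oppr_eq0 ?invr_eq0.
  apply: Rel_trans (Ha0 _ a0).
  by have := Rel_P hp homega b a' be' p2 g0; rewrite divfK // addrN.
case: (eqVneq a 0) => [->|a0]; last by move=> _; apply: Hab.
case: (eqVneq be 0) => [->|b0]; first by rewrite eqxx.
move=> _; apply: Rel_trans (Rel_F hp homega b _ _) _; exact: Hab.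
Qed.

Unset Implicit Arguments.

Theorem corollary1 (K : finFieldType) (p : nat) (hp : p \in [pchar K])
  (omega : algC) (homega : p.-primitive_root omega)
  (b : 'I_(mdeg K p) -> K) (hb : p = 2%N -> @self_dual K p b) :
  forall alpha beta alpha' beta' : K,
    (alpha, beta) != (0, 0) -> (alpha', beta') != (0, 0) ->
    exists2 U, @inJ K p omega b U &
      exists c : algC,
        invmx U *m (Xop alpha *m Zop p omega beta) *m U
        = c *: (Xop alpha' *m Zop p omega beta').
Proof.
move=> a be a' be' h h'.
have R1 := Rel_to1 hp homega hb h.
have R2 := Rel_to1 hp homega hb h'.
have [U hU [c c0 EU]] := Rel_trans R1 (Rel_sym hp homega R2).
exists U => //; exists c.
rewrite -/(W p omega a be) -/(W p omega a' be') -mulmxA EU mulKmx //.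
exact: (inJ_unit hp homega hU).
Qed.
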